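(* Let $G$ be an odd unicyclic graph on $n$ vertices $1,2,\ldots,n$ and edges $e_1,\ldots,e_n$, with cycle $C$ and incidence matrix $M$. Then $M$ is invertible and $M^{-1}=[a_{i,j}]$ is given by $$a_{i,j}=\begin{cases}\frac{(-1)^{d(e_i,j)}}{2} & \text{if } e_i\in C,\\ 0 & \text{if } e_i\notin C \text{ and } j\in G\setminus e_i[C],\\ (-1)^{d(e_i,j)} & \text{if } e_i\notin C\text{ and } j\notin G\setminus e_i[C].\end{cases}$$
   Context: A unicyclic graph on $n$ vertices is a simple connected graph with $n$ edges; it is odd if its unique cycle $C$ has odd length. The incidence matrix $M$ is the $n\times n$ matrix with $(i,j)$-entry $1$ if vertex $i$ is incident with edge $e_j$ and $0$ otherwise. For a vertex $j$ and edge $e_i=\{l_i,m_i\}$, $d(j,e_i)=d(e_i,j):=\min\{d(j,l_i),d(j,m_i)\}$ where $d$ is graph distance. For an edge $e$ not on $C$, $G\setminus e$ has two components; $G\setminus e[C]$ is the one containing $C$. *)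

(* Defs.v *)
From mathcomp Require Import all_boot all_order all_algebra.
Set Implicit Arguments. Unset Strict Implicit. Unset Printing Implicit Defensive.
Import GRing.Theory Num.Theory.

(* A graph on vertex set 'I_n with n edges e_0..e_{n-1}; edge e_i = {l i, m i}. *)
Section Graph.
Variables (n : nat) (l m : 'I_n -> 'I_n).

Definition joins (i : 'I_n) (u v : 'I_n) : bool :=
  ((l i == u) && (m i == v)) || ((l i == v) && (m i == u)).

Definition simple_edges : Prop :=
  (forall i, l i != m i) /\
  (forall i k, joins i (l k) (m k) -> i = k).

Definition adj : rel 'I_n := fun u v => [exists i, joins i u v].

Definition adj_wo (i : 'I_n) : rel 'I_n :=
  fun u v => [exists k, (k != i) && joins k u v].

Definition connected_graph : Prop := forall u v, connect adj u v.

(* unicyclic: simple connected with n vertices and n edges *)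
Definition unicyclic : Prop := simple_edges /\ connected_graph.

Definition reach (k : nat) (u v : 'I_n) : bool :=
  [exists p : k.-tuple 'I_n, path adj u p && (last u p == v)].

(* graph distance (for a connected graph, the least k with a u-v walk of
   length k; it is always < n) *)
Definition gdist (u v : 'I_n) : nat := find (fun k => reach k u v) (iota 0 n).

Definition edist (i j : 'I_n) : nat := minn (gdist j (l i)) (gdist j (m i)).

Definition is_cycle (C : {set 'I_n}) : Prop :=
  exists s : seq 'I_n,
    [/\ 3 <= size s, uniq s, cycle adj s &
        forall i, (i \in C) =
          [&& l i \in s, m i \in s & (next s (l i) == m i) || (next s (m i) == l i)]].

(* j lies in G \ e_i [C], the component of G \ e_i containing C *)
Definition in_comp_C (C : {set 'I_n}) (i j : 'I_n) : bool :=
  [exists k in C, connect (adj_wo i) j (l k)].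

Definition incidence (R : nzRingType) : 'M[R]_n :=
  \matrix_(v, e) (if (v == l e) || (v == m e) then 1 else 0)%R.

Definition claimed_inv (R : fieldType) (C : {set 'I_n}) : 'M[R]_n :=
  \matrix_(i, j)
    (if i \in C then ((-1) ^+ edist i j / 2%:R)%R
     else if in_comp_C C i j then 0%R
     else (-1) ^+ edist i j)%R.

End Graph.

(* Main.v *)
Require Import Defs.
From mathcomp Require Import all_boot all_order all_algebra.
From mathcomp Require Import zify.
Import GRing.Theory Num.Theory.
Set Implicit Arguments. Unset Strict Implicit. Unset Printing Implicit Defensive.

Section Proofs.
Variables (n : nat) (l m : 'I_n -> 'I_n).
Hypothesis Hs : simple_edges l m.
Hypothesis Hc : connected_graph l m.

Local Notation joins := (joins l m).
Local Notation adj := (adj l m).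
Local Notation adj_wo := (adj_wo l m).
Local Notation reach := (reach l m).
Local Notation gdist := (gdist l m).
Local Notation edist := (edist l m).

Lemma lm_neq k : l k != m k. Proof. exact: Hs.1. Qed.

Lemma joinsC k x y : joins k x y = joins k y x.
Proof. by rewrite /Defs.joins orbC. Qed.

Lemma joins_lm k : joins k (l k) (m k).
Proof. by rewrite /Defs.joins !eqxx. Qed.

Lemma adjC x y : adj x y = adj y x.
Proof.
by apply/existsP/existsP => -[k Hk]; exists k; rewrite joinsC.
Qed.

Lemma adj_symmetric : symmetric adj.
Proof. by move=> x y; rewrite adjC. Qed.

Lemma adj_wo_symmetric i : symmetric (adj_wo i).
Proof.
move=> x y; apply/existsP/existsP => -[k Hk]; exists k; by rewrite joinsC.
Qed.

Definition eid (x y : 'I_n) : 'I_n := odflt x [pick k | joins k x y].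

Lemma eidP x y : adj x y -> joins (eid x y) x y.
Proof.
rewrite /eid; case: pickP => [k Hk | H] //= /existsP [k Hk].
by rewrite H in Hk.
Qed.

Lemma joins_case k x y : joins k x y ->
  (l k = x /\ m k = y) \/ (l k = y /\ m k = x).
Proof. by case/orP => /andP [/eqP -> /eqP ->]; [left | right]. Qed.

Lemma eid_eq k x y : joins k x y -> eid x y = k.
Proof.
move=> Hk; have Hadj : adj x y by apply/existsP; exists k.
have H' := eidP Hadj.
apply/esym/(Hs.2 k (eid x y)).
case: (joins_case H') => [[-> ->] | [-> ->]] //; by rewrite joinsC.
Qed.

Lemma joins_neq k x y : joins k x y -> x != y.
Proof.
case/joins_case => [[<- <-] | [<- <-]]; first exact: lm_neq.
by rewrite eq_sym lm_neq.
Qed.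

Lemma adj_neq x y : adj x y -> x != y.
Proof. by move=> /eidP /joins_neq. Qed.

Lemma reachP k u v : reach k u v ->
  exists p : seq 'I_n, [/\ size p = k, path adj u p & last u p = v].
Proof.
move=> /existsP [t /andP [Hp /eqP Hl]]; exists (val t); split => //.
exact: size_tuple.
Qed.

Lemma reach_of k u v (p : seq 'I_n) :
  size p = k -> path adj u p -> last u p = v -> reach k u v.
Proof.
move=> Hk Hp Hl; subst k; apply/existsP; exists (in_tuple p).
by rewrite /= Hp Hl eqxx.
Qed.

Lemma gdist_le k u v : reach k u v -> (gdist u v <= k)%N.
Proof.
move=> Hr; rewrite /Defs.gdist.
case: (ltnP k n) => Hk.
  rewrite leqNgt; apply/negP => H.
  have := before_find 0%N H; rewrite nth_iota // add0n.
  by rewrite Hr.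
apply: leq_trans (find_size _ _) _; by rewrite size_iota.
Qed.

Lemma reach0 u : reach 0 u u.
Proof. exact: (@reach_of 0 u u [::]). Qed.

Lemma gdist_refl u : gdist u u = 0%N.
Proof. by apply/eqP; rewrite -leqn0; apply: gdist_le (reach0 u). Qed.

Lemma reach_rcons k u w y : reach k u w -> adj w y -> reach k.+1 u y.
Proof.
move=> /reachP [p [Hs' Hp Hl]] Ha.
apply: (@reach_of _ _ _ (rcons p y)).
- by rewrite size_rcons Hs'.
- by rewrite rcons_path Hp Hl.
- by rewrite last_rcons.
Qed.

Lemma reach_cons k u v x : adj v u -> reach k u x -> reach k.+1 v x.
Proof.
move=> Ha /reachP [p [Hs' Hp Hl]].
apply: (@reach_of _ _ _ (u :: p)); by rewrite /= ?Hs' ?Ha ?Hp.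
Qed.

Lemma gdist_reach u v : reach (gdist u v) u v.
Proof.
have [p Hp ->] := connectP (Hc u v).
case: (shortenP Hp) => p' Hp' Hu _.
have Hsz : (size p' < n)%N.
  have := max_card (mem (u :: p')).
  by rewrite (card_uniqP Hu) card_ord.
have Hr : reach (size p') u (last u p') by apply: (reach_of (p:=p')).
have Hh : has (fun k => reach k u (last u p')) (iota 0 n).
  by apply/hasP; exists (size p') => //; rewrite mem_iota.
have := nth_find 0%N Hh.
have Hf : (find (fun k => reach k u (last u p')) (iota 0 n) < n)%N.
  by rewrite -[X in (_ < X)%N](size_iota 0 n) -has_find.
by rewrite nth_iota ?add0n.
Qed.


Lemma gdist_adj u v x : adj v u -> (gdist v x <= (gdist u x).+1)%N.
Proof. move=> Ha; apply: gdist_le; exact: reach_cons Ha (gdist_reach u x). Qed.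

Lemma edist_adj i u v : adj v u -> (edist i v <= (edist i u).+1)%N.
Proof.
move=> Ha; rewrite /Defs.edist.
have := gdist_adj (l i) Ha; have := gdist_adj (m i) Ha. lia.
Qed.

Lemma edist_att i u : exists x, (x = l i \/ x = m i) /\ gdist u x = edist i u.
Proof.
rewrite /Defs.edist; case: (leqP (gdist u (l i)) (gdist u (m i))) => H.
  by exists (l i); split; [left | lia].
by exists (m i); split; [right | lia].
Qed.

Lemma avoid i u : forall p w j, path adj w p -> reach j u w ->
  (j + size p <= edist i u)%N -> path (adj_wo i) w p.
Proof.
elim => [|y p IH] w j //= /andP [Ha Hp] Hr Hle.
apply/andP; split; last first.
  apply: (IH y j.+1 Hp (reach_rcons Hr Ha)); by rewrite addSn -addnS.
apply/existsP; exists (eid w y); rewrite eidP // andbT.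
apply/eqP => Hi; have Hj := eidP Ha; rewrite Hi in Hj.
have Hg := gdist_le Hr.
move: Hle; rewrite /Defs.edist.
case: (joins_case Hj) => [[Hl _] | [_ Hm]]; subst w; lia.
Qed.

Local Notation F2 := 'F_2.
Local Open Scope ring_scope.

Lemma char2 : (2%N \in [char F2]). Proof. exact: pchar_Fp. Qed.
Lemma addxx (x : F2) : x + x = 0. Proof. by rewrite -mulr2n -mulr_natr pchar_Fp_0 ?mulr0. Qed.
Lemma F2_cases (x : F2) : x = 0 \/ x = 1.
Proof. move: x => [[|[|k]] //= H]; [left|right]; exact: val_inj. Qed.
Lemma F2_nat k : (k%:R : F2) = (odd k)%:R.
Proof. by rewrite -(Fp_nat_mod (isT : prime 2)) modn2. Qed.
Lemma F2_10 : (1 : F2) != 0. Proof. exact: oner_neq0. Qed.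
Lemma F2_b0 (b : bool) : ((b%:R : F2) == 0) = ~~ b.
Proof. by case: b; rewrite ?eqxx ?F2_10. Qed.

Lemma sum_two (R : nzRingType) (f : 'I_n -> R) e :
  \sum_v f v * ((v == l e) || (v == m e))%:R = f (l e) + f (m e).
Proof.
rewrite (bigD1 (l e)) //= eqxx mulr1 (bigD1 (m e)) /=; last by rewrite eq_sym lm_neq.
rewrite eqxx orbT mulr1 big1 ?addr0 // => v /andP [H1 H2].
by rewrite (negbTE H1) (negbTE H2) mulr0.
Qed.

Lemma sum_delta (R : nzRingType) (f : 'I_n -> R) k :
  \sum_e (k == e)%:R * f e = f k.
Proof.
rewrite (bigD1 k) //= eqxx mul1r big1 ?addr0 // => e He.
by rewrite eq_sym (negbTE He) mul0r.
Qed.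

Definition A2 : 'M[F2]_n := \matrix_(e, v) (((v == l e) || (v == m e))%:R).
Definition delta (k : 'I_n) : 'rV[F2]_n := \row_e ((e == k)%:R).

Lemma deltaA k z : (delta k *m A2) 0 z = (z == l k)%:R + (z == m k)%:R.
Proof.
rewrite !mxE (eq_bigr (fun e => (k == e)%:R * A2 e z)); last first.
  by move=> e _; rewrite !mxE eq_sym.
rewrite sum_delta mxE.
case: (eqVneq z (l k)) => [->|Hz] /=; last by rewrite add0r.
by rewrite (negbTE (lm_neq k)) addr0.
Qed.

Fixpoint wv (u : 'I_n) (p : seq 'I_n) : 'rV[F2]_n :=
  if p is y :: p' then delta (eid u y) + wv y p' else 0.

Lemma wvA u p z : path adj u p ->
  (wv u p *m A2) 0 z = (z == u)%:R + (z == last u p)%:R.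
Proof.
elim: p u => [|y p IH] u /=. move=> _. by rewrite mul0mx mxE; apply/esym/addxx.
move=> /andP [Ha Hp]; rewrite mulmxDl mxE deltaA IH //.
case: (joins_case (eidP Ha)) => [[-> ->]|[-> ->]].
  by rewrite -addrA [X in _ + X]addrA addxx add0r.
by rewrite addrACA addxx add0r.
Qed.

Definition tot (w : 'rV[F2]_n) : F2 := \sum_e w 0 e.

Lemma tot_delta k : tot (delta k) = 1.
Proof.
rewrite /tot (eq_bigr (fun e => (k == e)%:R * 1)); first by rewrite sum_delta.
by move=> e _; rewrite mxE mulr1 eq_sym.
Qed.
Lemma totD w1 w2 : tot (w1 + w2) = tot w1 + tot w2.
Proof. by rewrite /tot -big_split; apply: eq_bigr => e _; rewrite mxE. Qed.
Lemma tot0 : tot 0 = 0.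
Proof. by rewrite /tot big1 // => e _; rewrite mxE. Qed.
Lemma tot_wv u p : tot (wv u p) = (size p)%:R.
Proof.
elim: p u => [|y p IH] u /=; first by rewrite tot0.
by rewrite totD tot_delta IH -[(size p).+1]add1n natrD.
Qed.

Lemma wv_avoid k u p : path (fun x y => eid x y != k) u p -> wv u p 0 k = 0.
Proof.
elim: p u => [|y p IH] u /=; first by rewrite mxE.
by move=> /andP [H Hp]; rewrite !mxE IH // addr0 eq_sym (negbTE H).
Qed.

Lemma path_inv (T : Type) (e : rel T) (P : T -> Prop) x p :
  path e x p -> P x -> (forall a b, P a -> e a b -> P b) -> P (last x p).
Proof.
move=> Hp Hx Hi; elim: p x Hp Hx => [|y p IH] x //= /andP [H1 H2] Hx.
apply: IH => //; exact: Hi H1.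
Qed.

Lemma ker_le1 : (\rank (kermx A2) <= 1)%N.
Proof.
have H1 : (\rank (kermx A2^T) <= 1)%N.
  have Hsub : (kermx A2^T <= (const_mx 1 : 'rV[F2]_n))%MS.
    apply/row_subP => j.
    set r := row j (kermx A2^T).
    have Hr : r *m A2^T = 0 by rewrite /r -row_mul mulmx_ker row0. clearbody r.
    have Hle : forall e, r 0 (l e) = r 0 (m e).
      move=> e; move/rowP: Hr => /(_ e); rewrite !mxE.
      rewrite (eq_bigr (fun v => r 0 v * ((v == l e) || (v == m e))%:R)).
        rewrite sum_two => /eqP; rewrite addr_eq0 oppr_char2 ?char2 //.
        by move/eqP.
      by move=> v _; rewrite !mxE.
    have Hadj : forall a b, r 0 a = r 0 j -> adj a b -> r 0 b = r 0 j.
      move=> a b Ha /eidP; set k := eid a b; move/joins_case => [[Ea Eb]|[Eb Ea]]; [by rewrite -Eb -Hle Ea | by rewrite -Eb Hle Ea].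
    have Hconst : forall v, r 0 v = r 0 j.
      move=> v; have [p Hp ->] := connectP (Hc j v).
      exact: (path_inv (P := fun a => r 0 a = r 0 j)) Hp _ Hadj.
    have -> : r = r 0 j *: const_mx 1.
      by apply/rowP => v; rewrite !mxE mulr1 Hconst.
    exact: scalemx_sub (submx_refl _).
  apply: leq_trans (mxrankS Hsub) _; exact: rank_leq_row.
have := mxrank_ker A2^T; have := mxrank_ker A2; rewrite mxrank_tr.
have := rank_leq_row A2. lia.
Qed.

Lemma ker_cases (c w : 'rV[F2]_n) : c *m A2 = 0 -> c != 0 ->
  w *m A2 = 0 -> w = 0 \/ w = c.
Proof.
move=> Hc0 Hcn Hw0.
have Hc' : (c <= kermx A2)%MS by apply/sub_kermxP.
have Hw' : (w <= kermx A2)%MS by apply/sub_kermxP.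
have HK : (kermx A2 <= c)%MS.
  rewrite -(mxrank_leqif_sup Hc').2 rank_rV Hcn /=.
  have := ker_le1; have := mxrankS Hc'; rewrite rank_rV Hcn. lia.
case/submxP: (submx_trans Hw' HK) => D ->.
rewrite (mx11_scalar D) mul_scalar_mx.
by case: (F2_cases (D 0 0)) => ->; [left; rewrite scale0r | right; rewrite scale1r].
Qed.


Variables (C : {set 'I_n}) (s : seq 'I_n).
Hypotheses (Hs3 : (3 <= size s)%N) (Hsu : uniq s) (Hsc : cycle adj s)
  (HC : forall i, (i \in C) =
          [&& l i \in s, m i \in s & (next s (l i) == m i) || (next s (m i) == l i)]).
Hypothesis HCodd : odd #|C|.

Lemma next_next x : x \in s -> next s (next s x) != x.
Proof.
move=> Hx; case: (rot_to Hx) => i s' Hrot.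
rewrite -!(next_rot i Hsu) Hrot.
have Hu : uniq (x :: s') by rewrite -Hrot rot_uniq.
have Hsz : (2 <= size s')%N by move: Hs3; rewrite -(size_rot i) Hrot /=.
move: Hu Hsz; case: s' Hrot => [|y [|z q]] //= _ /andP [Hx1 /andP [Hy _]] _.
rewrite eqxx.
have Hyx : (y == x) = false.
  by apply/negbTE; apply: contraNneq Hx1 => ->; rewrite inE eqxx.
rewrite Hyx eqxx.
by apply: contraNneq Hx1 => ->; rewrite !inE eqxx orbT.
Qed.

Definition cvec : 'rV[F2]_n := \row_e ((e \in C)%:R).
Definition k0 : 'rV[F2]_n := \row_e (\sum_(x <- s) (eid x (next s x) == e)%:R).

Lemma sum_seq_pred1 (R : nzRingType) (a : 'I_n) (f : 'I_n -> R) :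
  \sum_(x <- s) (x == a)%:R * f x = (a \in s)%:R * f a.
Proof.
case: (boolP (a \in s)) => Ha.
  rewrite (bigD1_seq a) //= eqxx mul1r big1 ?addr0 ?mul1r // => x Hx.
  by rewrite (negbTE Hx) mul0r.
rewrite mul0r big1_seq // => x /andP [_ Hx].
have -> : (x == a) = false by apply/negbTE; apply: contraNneq Ha => <-.
by rewrite mul0r.
Qed.

Lemma eid_next_eq x e : x \in s ->
  (eid x (next s x) == e) =
  ((l e == x) && (m e == next s x)) || ((l e == next s x) && (m e == x)).
Proof.
move=> Hx; have Ha := next_cycle Hsc Hx.
apply/eqP/idP => [<-|H]; first exact: eidP.
exact: eid_eq.
Qed.

Lemma k0E : k0 = cvec.
Proof.
apply/rowP => e; rewrite !mxE.
rewrite big_seq (eq_bigr (fun x =>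
   (x == l e)%:R * (m e == next s (l e))%:R +
   (x == m e)%:R * (l e == next s (m e))%:R)); last first.
  move=> x Hx; rewrite eid_next_eq // -!natrM !mulnb -natrD; congr (_%:R).
  have Hlm := lm_neq e; have Hml : m e != l e by rewrite eq_sym.
  case: (eqVneq x (l e)) => [Exl|Hxl].
    subst x; rewrite (negbTE Hml) (negbTE Hlm) /=.
    by rewrite andbF orbF addn0.
  case: (eqVneq x (m e)) => [Exm|Hxm].
    by subst x; rewrite /= andbT.
  by rewrite /= ?andbF ?andbT.
rewrite -big_seq big_split /= !sum_seq_pred1 HC.
have Hnn1 := @next_next (l e). have Hnn2 := @next_next (m e).
have Hm1 := mem_next s (l e). have Hm2 := mem_next s (m e).
case: (boolP (l e \in s)) => H1; case: (boolP (m e \in s)) => H2 /=;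
  rewrite ?mul0r ?mul1r ?add0r ?addr0 //.
- case: (eqVneq (m e) (next s (l e))) => [E1|E1];
  case: (eqVneq (l e) (next s (m e))) => [E2|E2]; rewrite /= ?add0r ?addr0 //.
  by move: (Hnn1 H1); rewrite -E1 -E2 eqxx.
- case: (eqVneq (m e) (next s (l e))) => E1 //.
  by move: H2; rewrite E1 Hm1 H1.
- case: (eqVneq (l e) (next s (m e))) => E2 //.
  by move: H1; rewrite E2 Hm2 H2.
Qed.


Lemma k0A : k0 *m A2 = 0.
Proof.
apply/rowP => z; rewrite !mxE.
rewrite (eq_bigr (fun e => \sum_(x <- s) (eid x (next s x) == e)%:R * A2 e z));
  last by move=> e _; rewrite mxE mulr_suml.
rewrite exchange_big /=.
rewrite (eq_bigr (fun x => A2 (eid x (next s x)) z)); last by move=> x _; rewrite sum_delta.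
rewrite big_seq (eq_bigr (fun x => (x == z)%:R * 1 + (x == prev s z)%:R * 1)).
  rewrite -big_seq big_split /= !sum_seq_pred1 mem_prev.
  by rewrite addxx.
move=> x Hx; rewrite !mulr1 mxE.
have Ha := next_cycle Hsc Hx.
case: (joins_case (eidP Ha)) => [[-> ->]|[-> ->]].
- rewrite -natrD; congr (_%:R).
  have -> : (x == prev s z) = (next s x == z).
    apply/eqP/eqP => [->|<-]; [exact: next_prev | by rewrite prev_next].
  have Hn := adj_neq Ha.
  rewrite (eq_sym x z) (eq_sym (next s x) z).
  by case: (eqVneq z x) => [->|H]; [rewrite ?eqxx (negbTE Hn) | case: (z == next s x)].
- rewrite orbC -natrD; congr (_%:R).
  have -> : (x == prev s z) = (next s x == z).
    apply/eqP/eqP => [->|<-]; [exact: next_prev | by rewrite prev_next].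
  have Hn := adj_neq Ha.
  rewrite (eq_sym x z) (eq_sym (next s x) z).
  by case: (eqVneq z x) => [->|H]; [rewrite ?eqxx (negbTE Hn) | case: (z == next s x)].
Qed.


Lemma F2_b1 (b : bool) : ((b%:R : F2) == 1) = b.
Proof. by case: b; rewrite ?eqxx //= mulr0n eq_sym oner_eq0. Qed.

Lemma cvecA : cvec *m A2 = 0. Proof. by rewrite -k0E k0A. Qed.

Lemma tot_cvec : tot cvec = 1.
Proof.
rewrite /tot (eq_bigr (fun e => if e \in C then 1 else 0)); last first.
  by move=> e _; rewrite mxE; case: (_ \in C).
rewrite -big_mkcond /= sumr_const.
have -> : (1 : F2) *+ #|C| = #|C|%:R by [].
by rewrite F2_nat HCodd.
Qed.

Lemma cvec_neq0 : cvec != 0.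
Proof.
apply/eqP => H; have := tot_cvec; rewrite H tot0 => /eqP.
by rewrite eq_sym (negbTE F2_10).
Qed.

Lemma C_nonempty : exists k, k \in C.
Proof.
have : (0 < #|C|)%N by move: HCodd; case: #|C|.
by case/card_gt0P => k Hk; exists k.
Qed.

Lemma C_in_s k : k \in C -> l k \in s.
Proof. by rewrite HC => /and3P []. Qed.

Lemma eid_next_C x : x \in s -> eid x (next s x) \in C.
Proof.
move=> Hx; have Ha := next_cycle Hsc Hx.
rewrite HC; case: (joins_case (eidP Ha)) => [[-> ->]|[-> ->]];
  by rewrite Hx mem_next Hx ?eqxx ?orbT.
Qed.

Lemma wo_eid i a b : adj_wo i a b -> eid a b != i.
Proof. by move/existsP => [k /andP [Hk Hj]]; rewrite (eid_eq Hj). Qed.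

Lemma wo_adj i a b : adj_wo i a b -> adj a b.
Proof. by move/existsP => [k /andP [Hk Hj]]; apply/existsP; exists k. Qed.

Lemma cycle_conn i x y : i \notin C -> x \in s -> y \in s ->
  connect (adj_wo i) x y.
Proof.
move=> Hi Hx Hy.
have Hcyc : cycle (adj_wo i) s.
  apply: (sub_in_cycle (P := mem s) (e := fun a b => next s a == b));
    last exact: cycle_next.
  - move=> a b Ha _ /eqP <-; apply/existsP; exists (eid a (next s a)).
    rewrite eidP ?(next_cycle Hsc Ha) // andbT.
    by apply: contraNneq Hi => <-; exact: eid_next_C.
  - by apply/allP.
have Hsym := sym_connect_sym (adj_wo_symmetric i).
move: Hcyc Hx Hy; case: s => [|x0 p] //= Hp Hx Hy.
have H0 : forall z, z \in x0 :: p -> connect (adj_wo i) x0 z.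
  move=> z Hz; apply: (path_connect Hp).
  by rewrite in_cons mem_rcons Hz orbT.
by apply: connect_trans (H0 y Hy); rewrite Hsym; exact: H0.
Qed.

Local Notation S := (in_comp_C l m C).

Lemma S_wo i x y : adj_wo i x y -> S i x = S i y.
Proof.
move=> H; have Hsym := sym_connect_sym (adj_wo_symmetric i).
have Hxy : connect (adj_wo i) x y := connect1 H.
have Hyx : connect (adj_wo i) y x by rewrite Hsym.
by apply/existsP/existsP => -[k /andP [Hk Hc']]; exists k; rewrite Hk /=;
  apply: connect_trans Hc'.
Qed.

Lemma S_l i k : k \in C -> S i (l k).
Proof. by move=> Hk; apply/existsP; exists k; rewrite Hk connect0. Qed.

Lemma path_notS i k u p : k \in C -> path (adj_wo i) u p -> ~~ S i u ->
  path (fun a b => eid a b != k) u p.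
Proof.
move=> Hk; elim: p u => [|y p IH] u //= /andP [Ha Hp] Hu.
have Hy : ~~ S i y by rewrite -(S_wo Ha).
rewrite IH // andbT.
apply/eqP => E; have Hj := eidP (wo_adj Ha); rewrite E in Hj.
case: (joins_case Hj) => [[Hl _]|[Hl _]].
- by move: Hu; rewrite -Hl S_l.
- by move: Hy; rewrite -Hl S_l.
Qed.


Lemma addE (A B : 'rV[F2]_n) z : (A + B) 0 z = A 0 z + B 0 z.
Proof. by rewrite mxE. Qed.

Lemma parity i e : e != i -> (i \in C) || ~~ S i (l e) ->
  odd (edist i (l e)) != odd (edist i (m e)).
Proof.
move=> Hei Hcase.
have Huv : adj (l e) (m e) by apply/existsP; exists e; exact: joins_lm.
have Hvu : adj (m e) (l e) by rewrite adjC.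
apply/negP => /eqP Hodd.
have Hd : edist i (l e) = edist i (m e).
  have h1 := edist_adj i Huv; have h2 := edist_adj i Hvu.
  case: (ltngtP (edist i (l e)) (edist i (m e))) => H //.
  - have E : edist i (m e) = (edist i (l e)).+1 by lia.
    by move: Hodd; rewrite E /=; case: (odd _).
  - have E : edist i (l e) = (edist i (m e)).+1 by lia.
    by move: Hodd; rewrite E /=; case: (odd _).
have [x [Hx Hgx]] := edist_att i (l e).
have [y [Hy Hgy]] := edist_att i (m e).
have [P [HPs HPp HPl]] := reachP (gdist_reach (l e) x).
have [Q [HQs HQp HQl]] := reachP (gdist_reach (m e) y).
have HPw : path (adj_wo i) (l e) P.
  apply: (avoid (j:=0)) HPp (reach0 _) _; by rewrite add0n HPs Hgx.
have HQw : path (adj_wo i) (m e) Q.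
  apply: (avoid (j:=0)) HQp (reach0 _) _; by rewrite add0n HQs Hgy.
have HPi : wv (l e) P 0 i = 0 := wv_avoid (sub_path (@wo_eid i) HPw).
have HQi : wv (m e) Q 0 i = 0 := wv_avoid (sub_path (@wo_eid i) HQw).
have HPA : forall z, (wv (l e) P *m A2) 0 z = (z == l e)%:R + (z == x)%:R.
  by move=> z; rewrite wvA // HPl.
have HQA : forall z, (wv (m e) Q *m A2) 0 z = (z == m e)%:R + (z == y)%:R.
  by move=> z; rewrite wvA // HQl.
have Hsz : size P = size Q by rewrite HPs HQs Hgx Hgy Hd.
case: (eqVneq x y) => [Exy|Hxy].
-
  move: HQA; rewrite -Exy => HQA.
  set w := wv (l e) P + wv (m e) Q + delta e.
  have HwA : w *m A2 = 0.
    apply/rowP => z; rewrite !mulmxDl !addE HPA HQA deltaA -!natrD [X in _ = X]mxE.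
    apply/eqP; rewrite F2_nat F2_b0 !oddD !oddb.
    by case: (z == l e); case: (z == m e); case: (z == x).
  have Htot : tot w = 1.
    rewrite /w !totD !tot_wv tot_delta -Hsz -natrD F2_nat oddD addbb /=.
    by rewrite mulr0n add0r.
  have Hw0 : w != 0.
    by apply: contra_eq_neq Htot => ->; rewrite tot0 eq_sym F2_10.
  case: (ker_cases cvecA cvec_neq0 HwA) => Hw; first by rewrite Hw eqxx in Hw0.
  have Hwi : w 0 i = 0.
    rewrite /w !mxE HPi HQi add0r eq_sym (negbTE Hei) /=.
    by rewrite ?mulr0n ?addr0.
  have HiC : i \notin C.
    by move: Hwi; rewrite Hw mxE => /eqP; rewrite F2_b0.
  rewrite (negbTE HiC) /= in Hcase.
  have [k Hk] := C_nonempty.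
  have Hmv : ~~ S i (m e).
    rewrite -(S_wo (i:=i) (x:=l e)) //.
    by apply/existsP; exists e; rewrite Hei joins_lm.
  have Hke : k != e by apply: contraNneq Hcase => <-; exact: S_l.
  have Hwk : w 0 k = 0.
    rewrite /w !mxE (wv_avoid (path_notS Hk HPw Hcase)).
    rewrite (wv_avoid (path_notS Hk HQw Hmv)) add0r (negbTE Hke) /=.
    by rewrite ?mulr0n ?addr0.
  move: Hwk; rewrite Hw mxE Hk => /eqP.
  by rewrite F2_b0.
-
  set w := wv (l e) P + wv (m e) Q + delta e + delta i.
  have HwA : w *m A2 = 0.
    apply/rowP => z; rewrite !mulmxDl !addE HPA HQA !deltaA -!natrD [X in _ = X]mxE.
    apply/eqP; rewrite F2_nat F2_b0 !oddD !oddb.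
    move: Hxy; case: Hx => ->; case: Hy => ->; rewrite ?eqxx // => _;
    by case: (z == l e); case: (z == m e); case: (z == l i); case: (z == m i).
  have Htot : tot w = 0.
    rewrite /w !totD !tot_wv !tot_delta -Hsz -natrD.
    rewrite -[X in _ + X + _]mulr1n -[X in _ + X]mulr1n -!natrD F2_nat.
    by rewrite !oddD addbb /= mulr0n.
  have Hwi : w 0 i = 1.
    rewrite /w !mxE HPi HQi add0r eq_sym (negbTE Hei) eqxx /=.
    by rewrite !add0r.
  have Hw0 : w != 0 by apply: contra_eq_neq Hwi => ->; rewrite mxE eq_sym F2_10.
  case: (ker_cases cvecA cvec_neq0 HwA) => Hw; first by rewrite Hw eqxx in Hw0.
  by move: Htot; rewrite Hw tot_cvec => /eqP; rewrite (negbTE F2_10).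
Qed.


Lemma bridge i : i \notin C -> S i (l i) != S i (m i).
Proof.
move=> Hi; have [k Hk] := C_nonempty.
have Hsym := sym_connect_sym (adj_wo_symmetric i).
case Ha: (S i (l i)); case Hb: (S i (m i)) => //=.
- exfalso.
  have Hab : connect (adj_wo i) (l i) (m i).
    move: Ha Hb => /existsP [k1 /andP [Hk1 H1]] /existsP [k2 /andP [Hk2 H2]].
    apply: connect_trans H1 _.
    apply: connect_trans (cycle_conn Hi (C_in_s Hk1) (C_in_s Hk2)) _.
    by rewrite Hsym.
  have [p Hp Hl] := connectP Hab.
  set w := wv (l i) p + delta i.
  have HwA : w *m A2 = 0.
    apply/rowP => z; rewrite mulmxDl addE wvA ?(sub_path (@wo_adj i) Hp) //.
    by rewrite deltaA -Hl addrACA !addxx ?addr0 mxE.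
  have Hwi : w 0 i = 1.
    by rewrite addE (wv_avoid (sub_path (@wo_eid i) Hp)) mxE eqxx add0r.
  case: (ker_cases cvecA cvec_neq0 HwA) => Hw; move: Hwi; rewrite Hw mxE.
  + by move/eqP; rewrite eq_sym (negbTE F2_10).
  + by move/eqP; rewrite F2_b1 (negbTE Hi).
- exfalso.
  have HS : forall a b, S i a -> adj a b -> S i b.
    move=> a b Ha' Hab; case: (eqVneq (eid a b) i) => E.
    + have Hj := eidP Hab; rewrite E in Hj.
      case: (joins_case Hj) => [[Hl _]|[_ Hm]].
      * by move: Ha'; rewrite -Hl Ha.
      * by move: Ha'; rewrite -Hm Hb.
    + rewrite -(S_wo (i:=i) (x:=a)) //.
      by apply/existsP; exists (eid a b); rewrite E eidP.
  have [p Hp Hl] := connectP (Hc (l k) (l i)).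
  have := path_inv (P := fun a => S i a) Hp (S_l i Hk) HS.
  by rewrite -Hl Ha.
Qed.


Lemma edist_l i : edist i (l i) = 0%N.
Proof. by rewrite /Defs.edist gdist_refl min0n. Qed.
Lemma edist_m i : edist i (m i) = 0%N.
Proof. by rewrite /Defs.edist gdist_refl minn0. Qed.

Lemma sign_cancel (R : nzRingType) a b : odd a != odd b ->
  (-1) ^+ a + (-1) ^+ b = 0 :> R.
Proof.
rewrite -signr_odd -(signr_odd _ b).
by case: (odd a); case: (odd b) => //= _; rewrite ?expr1 ?expr0 ?addrN ?addNr.
Qed.

Lemma main_mul (R : numFieldType) :
  claimed_inv l m R C *m incidence l m R = 1%:M.
Proof.
apply/matrixP => i e; rewrite !mxE.
rewrite (eq_bigr (fun j => claimed_inv l m R C i j * ((j == l e) || (j == m e))%:R));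
  last by move=> j _; rewrite [incidence _ _ _ j e]mxE; case: (_ || _).
rewrite sum_two !mxE.
have H2 : (2%:R : R) != 0 by rewrite pnatr_eq0.
case: (boolP (i \in C)) => HiC.
- case: (eqVneq e i) => [->|Hei].
  + rewrite edist_l edist_m expr0 /= mulr1n -mulrDl -mulr2n.
    by rewrite divff.
  + rewrite -mulrDl sign_cancel ?mul0r; last by apply: parity; rewrite ?HiC.
    by rewrite /= mulr0n.
- case: (eqVneq e i) => [->|Hei].
  + have := bridge HiC; rewrite edist_l edist_m expr0 /= mulr1n.
    by case: (S i (l i)); case: (S i (m i)) => //= _; rewrite ?addr0 ?add0r.
  + have HSe : S i (l e) = S i (m e).
      by apply: S_wo; apply/existsP; exists e; rewrite Hei joins_lm.
    rewrite -HSe /= mulr0n; case HS: (S i (l e)); first by rewrite addr0.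
    by rewrite sign_cancel //; apply: parity; rewrite ?HS ?orbT.
Qed.

End Proofs.

Unset Implicit Arguments.

Theorem mainTheorem5 (R : numFieldType) (n : nat) (l m : 'I_n -> 'I_n)
    (C : {set 'I_n}) :
  unicyclic l m -> is_cycle l m C -> odd #|C| ->
  incidence l m R \in unitmx /\
  invmx (incidence l m R) = claimed_inv l m R C.
Proof.
move=> [Hs Hc] [s [Hs3 Hsu Hsc HC]] Hodd.
have H := main_mul Hs Hc Hs3 Hsu Hsc HC Hodd R.
case: (mulmx1_unit H) => _ Hunit; split => //.
by rewrite -[invmx _]mul1mx -H -mulmxA mulmxV // mulmx1.
Qed.
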